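(* Let $(S,\ast)$ be an adequate commutative partial semigroup and let $A$ be a $J_\delta$-set in $S$. Let $F\in\mathcal{P}_f(\mathcal{T}_S)$ and let $\langle H_n\rangle_{n=1}^\infty$ be a sequence in $\mathcal{P}_f(\mathbb{N})$ such that $\max H_n<\min H_{n+1}$ for each $n$. Then for every $W\in\mathcal{P}_f(S)$ there exist $a\in\sigma_S(W)$ and $G\in\mathcal{P}_f(\mathbb{N})$ such that for all $f\in F$, $\prod_{k\in G}\prod_{t\in H_k}f(t)\in\sigma_S(W\ast a)$ and $a\ast\prod_{k\in G}\prod_{t\in H_k}f(t)\in A$.
   Context: A partial semigroup is a pair $(S,\ast)$ where $\ast$ is an operation defined on a subset of $S\times S$ such that for all $x,y,z\in S$, $(x\ast y)\ast z=x\ast(y\ast z)$ in the sense that if either side is defined, so is the other and they are equal; it is commutative if $x\ast y=y\ast x$ whenever defined. For $s\in S$, $\phi_S(s)=\{t\in S: s\ast t\text{ is defined}\}$; for $H\in\mathcal{P}_f(S)$ (finite nonempty subsets), $\sigma_S(H)=\bigcap_{s\in H}\phi_S(s)$. $(S,\ast)$ is adequate if $\sigma_S(H)\ne\emptyset$ for all $H\in\mathcal{P}_f(S)$. A sequence $\langle y_n\rangle$ in $S$ is adequate if $\prod_{n\in F}y_n$ is defined for every $F\in\mathcal{P}_f(\mathbb{N})$ and for every $K\in\mathcal{P}_f(S)$ there is $m$ with $\prod_{n\in F}y_n\in\sigma_S(K)$ for all $F\in\mathcal{P}_f(\mathbb{N})$ with $\min F\ge m$. $\mathcal{T}_S$ is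 the set of all adequate sequences in $S$. For $W\in\mathcal{P}_f(S)$ and $a\in S$, $W\ast a=\{w\ast a: w\in W,\ w\ast a\text{ defined}\}$. A set $A\subseteq S$ is a $J_\delta$-set if for every $F\in\mathcal{P}_f(\mathcal{T}_S)$ and $W\in\mathcal{P}_f(S)$ there exist $a\in\sigma_S(W)$ and $H\in\mathcal{P}_f(\mathbb{N})$ such that for each $f\in F$, $\prod_{t\in H}f(t)\in\sigma_S(W\ast a)$ and $a\ast\prod_{t\in H}f(t)\in A$. *)

(* Defs.v *)
From mathcomp Require Import all_boot finmap.
From Stdlib Require List.
Set Implicit Arguments. Unset Strict Implicit. Unset Printing Implicit Defensive.
Local Open Scope fset_scope.

Section PartialSemigroup.
Variable S : Type.
(* A partial operation on S: [op x y = None] means "x * y is undefined". *)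
Variable op : S -> S -> option S.

(* (x*y)*z = x*(y*z) in the strong sense: either side defined iff the other is, and equal. *)
Definition psg_assoc : Prop :=
  forall x y z : S,
    obind (fun xy => op xy z) (op x y) = obind (fun yz => op x yz) (op y z).

Definition psg_comm : Prop := forall x y : S, op x y = op y x.

Definition defined (o : option S) : Prop := exists u, o = Some u.

Definition phi (s t : S) : Prop := defined (op s t).

(* sigma_S(H) for a finite set H of S, represented by a list *)
Definition sigma (H : seq S) (t : S) : Prop := forall s, List.In s H -> phi s t.

Definition adequate : Prop :=
  forall H : seq S, H <> [::] -> exists t, sigma H t.

Definition oop (a b : option S) : option S :=
  match a, b with Some x, Some y => op x y | _, _ => None end.

(* product x_1 * x_2 * ... * x_n of a nonempty list (None if empty or undefined) *)
Fixpoint plist (l : seq (option S)) : option S :=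
  match l with
  | [::] => None
  | [:: x] => x
  | x :: l' => oop x (plist l')
  end.

Definition prodF (F : {fset nat}) (g : nat -> option S) : option S :=
  plist [seq g i | i <- sort leq (enum_fset F)].

Definition adequate_seq (y : nat -> S) : Prop :=
  (forall F : {fset nat}, F != fset0 -> defined (prodF F (fun n => Some (y n)))) /\
  (forall K : seq S, K <> [::] ->
     exists m : nat, forall F : {fset nat}, F != fset0 ->
       (forall n, n \in F -> m <= n) ->
       exists p, prodF F (fun n => Some (y n)) = Some p /\ sigma K p).

Definition opr (W : seq S) (a : S) : seq S := pmap (fun w => op w a) W.

Definition Jdelta (A : S -> Prop) : Prop :=
  forall F : seq (nat -> S), F <> [::] -> (forall f, List.In f F -> adequate_seq f) ->
  forall W : seq S, W <> [::] ->
  exists a, sigma W a /\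
  exists H : {fset nat}, H != fset0 /\
    forall f, List.In f F ->
      exists p q, prodF H (fun t => Some (f t)) = Some p /\
        sigma (opr W a) p /\ op a p = Some q /\ A q.

End PartialSemigroup.

(* Main.v *)
Require Import Defs.
From mathcomp Require Import all_boot finmap.
From Stdlib Require List.
Local Open Scope fset_scope.

Section Aux.
Variable S : Type.
Variable op : S -> S -> option S.
Hypothesis Hassoc : psg_assoc op.

Lemma oopA a b c : oop op (oop op a b) c = oop op a (oop op b c).
Proof.
case: a => [x|] //; case: b => [y|] //=; try by case: c.
case: c => [z|] /=; last by case: (op x y).
have := Hassoc x y z; rewrite /=.
by case: (op x y) => [xy|] /=; case: (op y z) => [yz|] /=.
Qed.

Lemma plist_cons x l : l <> [::] -> plist op (x :: l) = oop op x (plist op l).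
Proof. by case: l. Qed.

Lemma plist_cat l1 l2 : l1 <> [::] -> l2 <> [::] ->
  plist op (l1 ++ l2) = oop op (plist op l1) (plist op l2).
Proof.
elim: l1 => [//|x l1 IH] _ Hl2.
case: l1 IH => [|y l1] IH; first by clear IH; case: l2 Hl2.
rewrite cat_cons plist_cons // IH // (@plist_cons x (y :: l1)) // oopA //; by case: l1 IH.
Qed.

Lemma plist_flatten (ls : seq (seq (option S))) : ls <> [::] ->
  all (fun l => 0 < size l) ls ->
  plist op (flatten ls) = plist op (map (plist op) ls).
Proof.
elim: ls => [//|l ls IH] _ /= /andP[Hl Hall].
case: ls IH Hall => [|l' ls] IH Hall.
  by rewrite /= cats0.
have Hne : l <> [::] by case: l Hl.
have Hfl : flatten (l' :: ls) <> [::].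
  move=> E; have := congr1 size E; rewrite /= size_cat.
  by move: Hall => /andP[]; case: (size l').
rewrite plist_cat // IH //.
Qed.

End Aux.
Section Blocks.
Variable H : nat -> {fset nat}.
Hypothesis HHne : forall n, H n != fset0.
Hypothesis HHinc : forall n i j, i \in H n -> j \in H n.+1 -> i < j.

Lemma memE (A : {fset nat}) x : (x \in enum_fset A) = (x \in A).
Proof. by []. Qed.

Lemma Hge k i : i \in H k -> k <= i.
Proof.
elim: k i => [//|k IH] i Hi.
have /fset0Pn [x Hx] := HHne k.
have := IH _ Hx; have := HHinc _ _ _ Hx Hi.
move=> h1 h2; exact: leq_ltn_trans h2 h1.
Qed.

Lemma Hlt k k' i j : k < k' -> i \in H k -> j \in H k' -> i < j.
Proof.
elim: k' j => [//|k' IH] j Hkk Hi Hj.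
move: Hkk; rewrite ltnS leq_eqVlt => /orP[/eqP E|Hlt].
  by subst k'; exact: HHinc _ _ _ Hi Hj.
have /fset0Pn [x Hx] := HHne k'.
exact: ltn_trans (IH _ Hlt Hi Hx) (HHinc _ _ _ Hx Hj).
Qed.

Definition sH k := sort leq (enum_fset (H k)).
Definition FL (ks : seq nat) := flatten (map sH ks).

Lemma sorted_sortfs (A : {fset nat}) : sorted ltn (sort leq (enum_fset A)).
Proof.
by rewrite ltn_sorted_uniq_leq sort_uniq fset_uniq (sort_sorted leq_total).
Qed.

Lemma FL_sorted ks : sorted ltn ks -> sorted ltn (FL ks).
Proof.
rewrite !(sorted_pairwise ltn_trans).
elim: ks => [//|k ks IH] /= /andP[Hall Hpw].
rewrite pairwise_cat IH // andbT -(sorted_pairwise ltn_trans) sorted_sortfs andbT.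
apply/allrelP => x y; rewrite mem_sort memE => Hx /flattenP [s /mapP [k' Hk' ->]].
rewrite mem_sort memE => Hy.
apply: (Hlt _ _ _ _ _ Hx Hy).
by move/allP: Hall => /(_ _ Hk').
Qed.

Lemma sortU (G : {fset nat}) :
  sort leq (enum_fset (seq_fset tt (FL (sort leq (enum_fset G))))) = FL (sort leq (enum_fset G)).
Proof.
apply: (irr_sorted_eq ltn_trans ltnn).
- exact: sorted_sortfs.
- exact/FL_sorted/sorted_sortfs.
- by move=> x; rewrite mem_sort memE seq_fsetE.
Qed.

End Blocks.

Lemma sort_ne (G : {fset nat}) : G != fset0 -> sort leq (enum_fset G) <> [::].
Proof.
move=> HG E; have := congr1 size E; rewrite size_sort /= => /cardfs0_eq E0.
by move: HG; rewrite E0 eqxx.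
Qed.

Lemma prodF_ext (S : Type) (op : S -> S -> option S) G (g1 g2 : nat -> option S) :
  g1 =1 g2 -> prodF op G g1 = prodF op G g2.
Proof. by move=> E; rewrite /prodF (eq_map E). Qed.

Section Main.
Variable S : Type.
Variable op : S -> S -> option S.
Hypothesis Hassoc : psg_assoc op.
Variable H : nat -> {fset nat}.
Hypothesis HHne : forall n, H n != fset0.
Hypothesis HHinc : forall n i j, i \in H n -> j \in H n.+1 -> i < j.
Variable w0 : S.

Definition gf (f : nat -> S) k := odflt w0 (prodF op (H k) (fun t => Some (f t))).

Variable f : nat -> S.
Hypothesis hf : adequate_seq op f.

Lemma Hg k : prodF op (H k) (fun t => Some (f t)) = Some (gf f k).
Proof.
rewrite /gf; have [u ->] := hf.1 (H k) (HHne k); by [].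
Qed.

Lemma key (G : {fset nat}) : G != fset0 ->
  prodF op G (fun k => Some (gf f k)) =
  prodF op (seq_fset tt (FL H (sort leq (enum_fset G)))) (fun t => Some (f t)).
Proof.
move=> HG.
rewrite [in RHS]/prodF (@sortU H HHne HHinc) /FL.
rewrite /prodF.
under eq_map => k do rewrite -Hg.
rewrite map_flatten -map_comp.
rewrite (@plist_flatten S op Hassoc).
- by rewrite -!map_comp.
- by case E: (sort leq (enum_fset G)) (@sort_ne G HG).
- rewrite all_map; apply/allP => k _ /=.
  by rewrite size_map /sH size_sort lt0n cardfs_eq0 HHne.
Qed.

Lemma U_ne (G : {fset nat}) : G != fset0 -> seq_fset tt (FL H (sort leq (enum_fset G))) != fset0.
Proof.
move=> /fset0Pn [k Hk]; have /fset0Pn [x Hx] := HHne k.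
apply/fset0Pn; exists x; rewrite seq_fsetE; apply/flattenP.
exists (sH H k); first by apply: map_f; rewrite mem_sort.
by rewrite mem_sort.
Qed.

Lemma U_ge (G : {fset nat}) m : (forall n, n \in G -> m <= n) ->
  forall n, n \in seq_fset tt (FL H (sort leq (enum_fset G))) -> m <= n.
Proof.
move=> Hm n; rewrite seq_fsetE => /flattenP [s /mapP [k Hk ->]].
rewrite mem_sort => Hn.
have Hk' : k \in G by rewrite mem_sort in Hk.
exact: leq_trans (Hm _ Hk') (@Hge H HHne HHinc _ _ Hn).
Qed.

Lemma gf_adequate : adequate_seq op (gf f).
Proof.
split.
- move=> G HG; rewrite key //; exact: hf.1 _ (U_ne G HG).
- move=> K HK; have [m Hm] := hf.2 K HK; exists m => G HG HGm.
  rewrite key //; apply: Hm; first exact: U_ne.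
  exact: U_ge.
Qed.

End Main.

Theorem lemma3p2 (S : Type) (op : S -> S -> option S)
  (Hassoc : psg_assoc op) (Hcomm : psg_comm op) (Hadeq : adequate op)
  (A : S -> Prop) (HA : Jdelta op A)
  (F : seq (nat -> S)) (HFne : F <> [::])
  (HF : forall f, List.In f F -> adequate_seq op f)
  (H : nat -> {fset nat}) (HHne : forall n, H n != fset0)
  (HHinc : forall n i j, i \in H n -> j \in H n.+1 -> i < j)
  (W : seq S) (HWne : W <> [::]) :
  exists a, sigma op W a /\
  exists G : {fset nat}, G != fset0 /\
    forall f, List.In f F ->
      exists p q,
        prodF op G (fun k => prodF op (H k) (fun t => Some (f t))) = Some p /\
        sigma op (opr op W a) p /\ op a p = Some q /\ A q.
Proof.
have [w0 _] : exists w0 : S, True by case: W HWne => [//|w _] _; exists w.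
pose F' := map (@gf S op H w0) F.
have HF'ne : F' <> [::] by rewrite /F'; clear F'; case: F HFne HF.
have HF' : forall g, List.In g F' -> adequate_seq op g.
  move=> g /List.in_map_iff [f [<- Hf]].
  exact: (@gf_adequate S op Hassoc H HHne HHinc w0 f (HF f Hf)).
have [a [HaW [G [HG HGf]]]] := HA F' HF'ne HF' W HWne.
exists a; split => //; exists G; split => //.
move=> f Hf.
have [p [q [Hp Hrest]]] := HGf _ (List.in_map (@gf S op H w0) F f Hf).
exists p, q; split => //.
rewrite -Hp; apply: prodF_ext => k.
exact: (@Hg S op H HHne w0 f (HF f Hf)).
Qed.
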